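(* Let $T:\mathbb{R}^{M}\times\cdots\times\mathbb{R}^{M}\to\mathbb{R}^D$ ($N$ factors) be a real $N$-linear contraction with respect to the Euclidean norm, with coefficients $T_{i,s}$, such that either (i) $T$ is a convex combination of norm-preserving $N$-linear maps $\mathbb{R}^M\times\cdots\times\mathbb{R}^M\to\mathbb{R}^D$, or (ii) $T$ has a norm-preserving dilation. Let $\rho$ be a density operator on $\mathcal{H}_1\otimes\cdots\otimes\mathcal{H}_N$ with $\rho^{T_\tau}\ge0$ for every subset $\tau\subseteq\{1,\dots,N\}$. Then for all Hermitian operators $A^{(k)}_j$ on $\mathcal{H}_k$ ($k=1,\dots,N$, $j=1,\dots,M$), $$\sum_{i=1}^D\Big(\sum_{s}T_{i,s}\,\mathrm{tr}\big[\rho\,A^{(1)}_{s_1}\otimes\cdots\otimes A^{(N)}_{s_N}\big]\Big)^2\le\sum_{s}\mathrm{tr}\big[\rho\,(A^{(1)}_{s_1})^2\otimes\cdots\otimes(A^{(N)}_{s_N})^2\big].$$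
   Context: An $N$-linear map $T$ is written $T(a^{(1)},\dots,a^{(N)})_i=\sum_{s\in\{1,\dots,M\}^N}T_{i,s}\prod_k a^{(k)}_{s_k}$. It is a contraction if $\|T(a^{(1)},\dots,a^{(N)})\|\le\prod_k\|a^{(k)}\|$ for all $a^{(k)}\in\mathbb{R}^M$, and norm-preserving if equality always holds ($\|\cdot\|$ Euclidean). A norm-preserving dilation of $T$ is a norm-preserving $N$-linear map $\tilde T:\mathbb{R}^M\times\cdots\times\mathbb{R}^M\to\mathbb{R}^{D'}$ with $D'\ge D$ whose first $D$ output coordinates coincide with $T$. $\mathcal{H}_1,\dots,\mathcal{H}_N$ are finite-dimensional complex Hilbert spaces with fixed orthonormal bases; $\rho^{T_\tau}$ is the partial transpose on the factors in $\tau$; a density operator is positive semidefinite of trace one. *)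

(* Defs.v *)
From HB Require Import structures.
From mathcomp Require Import all_boot all_order all_algebra.
From mathcomp Require Import reals.
From mathcomp Require Import complex.
Set Implicit Arguments. Unset Strict Implicit. Unset Printing Implicit Defensive.
Import Order.TTheory GRing.Theory Num.Theory.
Local Open Scope ring_scope.

Definition midx (N M : nat) := {ffun 'I_N -> 'I_M}.

(* An N-linear map R^M x ... x R^M -> R^D is given by coefficients T i s. *)
Definition mlcoef (R : realType) (N M D : nat) := 'I_D -> midx N M -> R.

Definition mlapply (R : realType) (N M D : nat) (T : mlcoef R N M D)
  (a : 'I_N -> 'I_M -> R) (i : 'I_D) : R :=
  \sum_(s : midx N M) T i s * \prod_(k < N) a k (s k).

Definition enorm (R : realType) (n : nat) (v : 'I_n -> R) : R :=
  Num.sqrt (\sum_(i < n) v i ^+ 2).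

Definition contraction (R : realType) (N M D : nat) (T : mlcoef R N M D) :=
  forall a : 'I_N -> 'I_M -> R,
    enorm (mlapply T a) <= \prod_(k < N) enorm (a k).

Definition norm_preserving (R : realType) (N M D : nat) (T : mlcoef R N M D) :=
  forall a : 'I_N -> 'I_M -> R,
    enorm (mlapply T a) = \prod_(k < N) enorm (a k).

Definition convex_comb_norm_preserving (R : realType) (N M D : nat)
  (T : mlcoef R N M D) :=
  exists (n : nat) (w : 'I_n -> R) (U : 'I_n -> mlcoef R N M D),
    [/\ forall l, 0 <= w l,
        \sum_(l < n) w l = 1,
        forall l, norm_preserving (U l) &
        forall a i, mlapply T a i = \sum_(l < n) w l * mlapply (U l) a i].

Definition has_np_dilation (R : realType) (N M D : nat) (T : mlcoef R N M D) :=
  exists (D' : nat) (hD : (D <= D')%N) (T' : mlcoef R N M D'),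
    norm_preserving T' /\
    forall a (i : 'I_D), mlapply T' a (widen_ord hD i) = mlapply T a i.

(* basis indices of the tensor product: tuples (x_1,...,x_N), x_k < d k *)
Definition tidx (N : nat) (d : 'I_N -> nat) := {dffun forall k : 'I_N, 'I_(d k)}.

(* operators on the tensor product, as matrices w.r.t. the product basis *)
Definition top (R : realType) (N : nat) (d : 'I_N -> nat) := tidx d -> tidx d -> R[i].

Definition tens (R : realType) (N : nat) (d : 'I_N -> nat)
  (A : forall k : 'I_N, 'M[R[i]]_(d k)) : top R d :=
  fun x y => \prod_(k < N) A k (x k) (y k).

Definition trprod (R : realType) (N : nat) (d : 'I_N -> nat) (rho X : top R d) : R[i] :=
  \sum_(x : tidx d) \sum_(y : tidx d) rho x y * X y x.

Definition tr (R : realType) (N : nat) (d : 'I_N -> nat) (rho : top R d) : R[i] :=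
  \sum_(x : tidx d) rho x x.

Definition mixidx (N : nat) (d : 'I_N -> nat) (tau : {set 'I_N}) (x y : tidx d)
  : tidx d := [ffun k => if k \in tau then y k else x k].

Definition ptrans (R : realType) (N : nat) (d : 'I_N -> nat) (tau : {set 'I_N})
  (rho : top R d) : top R d :=
  fun x y => rho (mixidx tau x y) (mixidx tau y x).

Definition psd (R : realType) (N : nat) (d : 'I_N -> nat) (rho : top R d) :=
  forall v : tidx d -> R[i],
    0 <= \sum_(x : tidx d) \sum_(y : tidx d) (v x)^* * rho x y * v y.

Definition density (R : realType) (N : nat) (d : 'I_N -> nat) (rho : top R d) :=
  psd rho /\ tr rho = 1.

Definition hermitian_mx (R : realType) (n : nat) (A : 'M[R[i]]_n) :=
  forall i j, A i j = (A j i)^*.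

(* Main.v *)
Require Import Defs.
From HB Require Import structures.
From mathcomp Require Import all_boot all_order all_algebra.
From mathcomp Require Import reals complex ring.
Import Order.TTheory GRing.Theory Num.Theory.
Local Open Scope ring_scope.
Set Implicit Arguments. Unset Strict Implicit. Unset Printing Implicit Defensive.

Lemma prod_sum_dep (R : comNzRingType) (I : finType) (T_ : I -> finType)
  (F : forall i, T_ i -> R) :
  \prod_i \sum_(j : T_ i) F i j = \sum_(f : {dffun forall i, T_ i}) \prod_i F i (f i).
Proof.
pose P_ := fun i => [ffun j => F i j] : {ffun T_ i -> R}.
transitivity (\prod_i \sum_(j : T_ i) P_ i j).
  by apply: eq_bigr => i _; apply: eq_bigr => j _; rewrite ffunE.
under eq_bigr do rewrite (big_tag (fun i => P_ i)).
rewrite bigA_distr_big_dep -big_fprod.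
rewrite (reindex (@fprod_of_dffun _ T_)); last exact/onW_bij/fprod_of_dffun_bij.
apply: eq_bigr => f _; apply: eq_bigr => i _.
by rewrite /P_ ffunE /fprod_of_dffun fprodE.
Qed.

Lemma sum_delta_r (K : pzSemiRingType) (T : finType) (F : T -> K) x :
  \sum_b F b * (b == x)%:R = F x.
Proof.
rewrite (bigD1 x) //= eqxx mulr1 big1 ?addr0 // => b /negbTE ->.
by rewrite mulr0.
Qed.

Lemma sum_delta_l (K : pzSemiRingType) (T : finType) (F : T -> K) x :
  \sum_b (b == x)%:R * F b = F x.
Proof.
rewrite (bigD1 x) //= eqxx mul1r big1 ?addr0 // => b /negbTE ->.
by rewrite mul0r.
Qed.

Section Main.
Variable R : realType.
Local Notation C := R[i].
Variables (N : nat) (d : 'I_N -> nat).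
Local Notation top := (top R d).

Definition mulop (X Y : top) : top := fun x y => \sum_z X x z * Y z y.
Definition herm (X : top) := forall x y, X x y = (X y x)^*.

Lemma tens_mul (B B' : forall k : 'I_N, 'M[C]_(d k)) x y :
  mulop (tens B) (tens B') x y = tens (fun k => B k *m B' k) x y.
Proof.
rewrite /mulop /tens.
under eq_bigr do rewrite -big_split /=.
rewrite -(prod_sum_dep (fun k j => B k (x k) j * B' k j (y k))).
by apply: eq_bigr => k _; rewrite mxE.
Qed.


Lemma sum3D (T : finType) (f g : T -> T -> T -> C) :
  \sum_x \sum_a \sum_b (f x a b + g x a b) =
  \sum_x \sum_a \sum_b f x a b + \sum_x \sum_a \sum_b g x a b.
Proof.
rewrite -big_split; apply: eq_bigr => x _; rewrite -big_split.
by apply: eq_bigr => a _; rewrite -big_split.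
Qed.

Lemma sum3N (T : finType) (f : T -> T -> T -> C) :
  \sum_x \sum_a \sum_b (- f x a b) = - \sum_x \sum_a \sum_b f x a b.
Proof.
rewrite -sumrN; apply: eq_bigr => x _; rewrite -sumrN.
by apply: eq_bigr => a _; rewrite -sumrN.
Qed.

Lemma variance (sg X : top) : psd sg -> tr sg = 1 -> herm X ->
  (trprod sg X)^+2 <= trprod sg (mulop X X).
Proof.
move=> Hpsd Htr HX.
set c := trprod sg X.
pose del (a b : tidx d) : C := (a == b)%:R.
have key : \sum_x \sum_a \sum_b
   ((X x a - c^* * del a x) * sg a b * (X b x - c * del b x))
   = trprod sg (mulop X X) - c^+2.
  have e : forall x a b, (X x a - c^* * del a x) * sg a b * (X b x - c * del b x)
    = X x a * sg a b * X b x + - ((X x a * sg a b * c) * del b x)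
      + - (c^* * (del a x * (sg a b * X b x)))
      + c^* * (del a x * (sg a b * c * del b x)).
    by move=> x a b; ring.
  under eq_bigr do under eq_bigr do under eq_bigr do rewrite e.
  rewrite !sum3D !sum3N.
  have E1 : \sum_x \sum_a \sum_b X x a * sg a b * X b x = trprod sg (mulop X X).
    rewrite /trprod /mulop.
    under [RHS]eq_bigr do under eq_bigr do rewrite mulr_sumr.
    rewrite exchange_big; apply: eq_bigr => a _.
    rewrite exchange_big; apply: eq_bigr => b _.
    by apply: eq_bigr => x _; ring.
  have E2 : \sum_x \sum_a \sum_b (X x a * sg a b * c) * del b x = c * c.
    under eq_bigr do under eq_bigr do rewrite sum_delta_r.
    have -> : c * c = c * \sum_x \sum_y sg x y * X y x by [].
    rewrite mulr_sumr exchange_big; apply: eq_bigr => a _.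
    rewrite mulr_sumr; apply: eq_bigr => x _; ring.
  have E3 : \sum_x \sum_a \sum_b c^* * (del a x * (sg a b * X b x)) = c^* * c.
    under eq_bigr do under eq_bigr do rewrite -mulr_sumr -mulr_sumr.
    under eq_bigr do rewrite -mulr_sumr /del sum_delta_l.
    by rewrite -mulr_sumr.
  have E4 : \sum_x \sum_a \sum_b c^* * (del a x * (sg a b * c * del b x)) = c^* * c.
    under eq_bigr do under eq_bigr do rewrite -mulr_sumr -mulr_sumr /del sum_delta_r.
    under eq_bigr do rewrite -mulr_sumr sum_delta_l.
    by rewrite -mulr_sumr -mulr_suml; move: Htr; rewrite /tr => ->; rewrite mul1r.
  rewrite E1 E2 E3 E4; ring.
rewrite -subr_ge0 -key; apply: sumr_ge0 => x _.
have := Hpsd (fun b => X b x - c * del b x).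
congr (_ <= _); apply: eq_bigr => a _; apply: eq_bigr => b _.
by rewrite [X x a]HX rmorphB rmorphM /del rmorph_nat.
Qed.

Lemma mixK (tau : {set 'I_N}) (x y : tidx d) :
  mixidx tau (mixidx tau x y) (mixidx tau y x) = x.
Proof. by apply/ffunP => k; rewrite !ffunE; case: (k \in tau). Qed.

Lemma mixxx (tau : {set 'I_N}) (x : tidx d) : mixidx tau x x = x.
Proof. by apply/ffunP => k; rewrite !ffunE; case: (k \in tau). Qed.

Lemma sum_mix (tau : {set 'I_N}) (F : tidx d -> tidx d -> C) :
  \sum_x \sum_y F x y = \sum_x \sum_y F (mixidx tau x y) (mixidx tau y x).
Proof.
rewrite !pair_big /=.
pose h (p : tidx d * tidx d) := (mixidx tau p.1 p.2, mixidx tau p.2 p.1).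
have hK : involutive h by case=> x y; rewrite /h /= !mixK.
by rewrite (reindex_inj (inv_inj hK)).
Qed.

Lemma ptrans_tens (tau : {set 'I_N}) (rho : top) (Cm : forall k, 'M[C]_(d k)) :
  trprod (ptrans tau rho) (tens (fun k => if k \in tau then (Cm k)^T else Cm k))
  = trprod rho (tens Cm).
Proof.
rewrite /trprod (sum_mix tau (fun x y => rho x y * tens Cm y x)) /ptrans.
apply: eq_bigr => x _; apply: eq_bigr => y _; congr (_ * _).
rewrite /tens; apply: eq_bigr => k _; rewrite /mixidx !ffunE.
by case: (k \in tau); rewrite ?mxE.
Qed.

Lemma tr_ptrans (tau : {set 'I_N}) (rho : top) : tr (ptrans tau rho) = tr rho.
Proof. by apply: eq_bigr => x _; rewrite /ptrans mixxx. Qed.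

Lemma trprod_sum (I : finType) (sg : top) (a : I -> C) (Xs : I -> top) :
  trprod sg (fun x y => \sum_s a s * Xs s x y) = \sum_s a s * trprod sg (Xs s).
Proof.
rewrite /trprod.
under eq_bigr do under eq_bigr do rewrite mulr_sumr.
under eq_bigr do rewrite exchange_big.
rewrite exchange_big; apply: eq_bigr => s _.
rewrite mulr_sumr; apply: eq_bigr => x _.
rewrite mulr_sumr; apply: eq_bigr => y _; ring.
Qed.

Lemma conjR (r : R) : ((r%:C)%C)^* = (r%:C)%C :> C.
Proof. by apply/eqP; rewrite -CrealE; apply/complex_realP; exists r. Qed.

Lemma herm_tens (B : forall k, 'M[C]_(d k)) :
  (forall k, hermitian_mx (B k)) -> herm (tens B).
Proof.
move=> HB x y; rewrite /tens rmorph_prod; apply: eq_bigr => k _.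
exact: HB.
Qed.

Lemma herm_comb (I : finType) (r : I -> R) (Xs : I -> top) :
  (forall s, herm (Xs s)) -> herm (fun x y => \sum_s ((r s)%:C)%C * Xs s x y).
Proof.
move=> HX x y; rewrite rmorph_sum; apply: eq_bigr => s _.
by rewrite rmorphM {1}[Xs s x y]HX -{1}(conjR (r s)).
Qed.

Lemma herm_tr n (B : 'M[C]_n) : hermitian_mx B -> hermitian_mx B^T.
Proof. by move=> HB i j; rewrite !mxE HB. Qed.

Lemma conjM (x y : C) : (x * y)^* = x^* * y^*. Proof. exact: rmorphM. Qed.
Lemma conjD (x y : C) : (x + y)^* = x^* + y^*. Proof. exact: rmorphD. Qed.
Lemma conjN (x : C) : (- x)^* = - x^*. Proof. exact: rmorphN. Qed.
Lemma conjB (x y : C) : (x - y)^* = x^* - y^*. Proof. exact: rmorphB. Qed.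
Lemma conjK (x : C) : (x^*)^* = x. Proof. exact: conjCK. Qed.

Lemma qform (sg : top) (a b : tidx d) (l : C) :
  \sum_x \sum_y ((x == a)%:R + l * (x == b)%:R)^* * sg x y
     * ((y == a)%:R + l * (y == b)%:R)
  = sg a a + l * sg a b + l^* * sg b a + l^* * l * sg b b.
Proof.
have e1 : forall x y, ((x == a)%:R + l * (x == b)%:R)^* * sg x y
     * ((y == a)%:R + l * (y == b)%:R)
   = ((x == a)%:R + l^* * (x == b)%:R) *
     (sg x y * (y == a)%:R + (l * sg x y) * (y == b)%:R).
  by move=> x y; rewrite rmorphD rmorphM !rmorph_nat; ring.
under eq_bigr do under eq_bigr do rewrite e1.
under eq_bigr do rewrite -mulr_sumr big_split /= !sum_delta_r.
have e2 : forall x, ((x == a)%:R + l^* * (x == b)%:R) * (sg x a + l * sg x b)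
  = (x == a)%:R * (sg x a + l * sg x b) + l^* * ((x == b)%:R * (sg x a + l * sg x b)).
  by move=> x; ring.
under eq_bigr do rewrite e2.
rewrite big_split /= -mulr_sumr !sum_delta_l; ring.
Qed.

Lemma psd_herm (sg : top) : psd sg -> herm sg.
Proof.
move=> Hpsd a b.
set p := sg a b; set q := sg b a.
have Q l : (sg a a + l * p + l^* * q + l^* * l * sg b b) \is Num.real.
  by apply: ger0_real; rewrite -qform; exact: Hpsd.
have Q' l : (sg b b + l * q + l^* * p + l^* * l * sg a a) \is Num.real.
  by apply: ger0_real; rewrite -qform; exact: Hpsd.
have Ra : sg a a \is Num.real.
  by have := Q 0; rewrite rmorph0 !mul0r !addr0.
have Rb : sg b b \is Num.real.
  by have := Q' 0; rewrite rmorph0 !mul0r !addr0.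
have R1 : p + q \is Num.real.
  have := rpredB (rpredB (Q 1) Ra) Rb.
  by rewrite rmorph1 !mul1r (_ : _ - _ - _ = p + q) //; ring.
have R2 : 'i * p - 'i * q \is Num.real.
  have := rpredB (rpredB (Q 'i) Ra) Rb.
  have ii : 'i * 'i = -1 :> C by rewrite -expr2 sqrCi.
  rewrite conjCi (_ : _ - _ - _ = 'i * p - 'i * q) //.
  by rewrite !mulNr ii; ring.
move: R1 R2; rewrite !CrealE !conjB !conjD !conjM conjCi => /eqP E1 /eqP E2.
have ii : 'i * 'i = -1 :> C by rewrite -expr2 sqrCi.
have E3 : p^* - q^* = q - p.
  have -> : p^* - q^* = 'i * (- 'i * p^* - - 'i * q^*).
    have ii' : 'i * - 'i = 1 :> C by rewrite mulrN ii opprK.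
    by rewrite -mulrBr mulrA ii' mul1r.
  by rewrite E2 -mulrBr mulrA ii; ring.
have E4 : p^* = q.
  apply: (@mulfI _ (2 : C)); first by rewrite pnatr_eq0.
  have -> : 2 * p^* = (p^* + q^*) + (p^* - q^*) by ring.
  by rewrite E1 E3; ring.
by rewrite -E4 conjK.
Qed.

Lemma conjS (I : finType) (F : I -> C) : (\sum_i F i)^* = \sum_i (F i)^*.
Proof. exact: rmorph_sum. Qed.

Lemma real_trprod (sg X : top) : herm sg -> herm X -> trprod sg X \is Num.real.
Proof.
move=> Hs HX; rewrite CrealE; apply/eqP.
rewrite /trprod conjS exchange_big; apply: eq_bigr => y _.
rewrite conjS; apply: eq_bigr => x _.
by rewrite conjM -Hs -HX mulrC.
Qed.

Variable M : nat.

Lemma quad_delta (u v : 'I_M) (Q : 'I_M -> 'I_M -> C) :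
  \sum_u' \sum_v' (((u' == u)%:R + (u' == v)%:R) * ((v' == u)%:R + (v' == v)%:R))
     * Q u' v' = Q u u + Q u v + (Q v u + Q v v).
Proof.
have e : forall u' v', (((u' == u)%:R + (u' == v)%:R) * ((v' == u)%:R + (v' == v)%:R))
     * Q u' v' = ((u' == u)%:R + (u' == v)%:R) *
        (Q u' v' * (v' == u)%:R + Q u' v' * (v' == v)%:R) :> C.
  by move=> u' v'; ring.
under eq_bigr do under eq_bigr do rewrite e.
under eq_bigr do rewrite -mulr_sumr big_split /= !sum_delta_r mulrDl.
by rewrite big_split /= !sum_delta_l.
Qed.

Lemma quad0 (Q : 'I_M -> 'I_M -> C) :
  (forall a : 'I_M -> R, \sum_u \sum_v ((a u * a v)%:C)%C * Q u v = 0) ->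
  forall B : 'I_M -> 'I_M -> C, (forall u v, B u v = B v u) ->
  \sum_u \sum_v B u v * Q u v = 0.
Proof.
move=> HQ B HB.
have H2 u v : Q u u + Q u v + (Q v u + Q v v) = 0.
  rewrite -quad_delta -[RHS](HQ (fun w => (w == u)%:R + (w == v)%:R)).
  apply: eq_bigr => u' _; apply: eq_bigr => v' _.
  by rewrite rmorphM !rmorphD !rmorph_nat.
have Hd u : Q u u = 0.
  have := H2 u u; rewrite (_ : _ + _ = Q u u * 4%:R); last by ring.
  by move/eqP; rewrite mulf_eq0 pnatr_eq0 orbF => /eqP.
have Ha u v : Q u v + Q v u = 0.
  by have := H2 u v; rewrite !Hd add0r addr0.
set S := \sum_u \sum_v B u v * Q u v.
have ES : S = \sum_u \sum_v B u v * Q v u.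
  rewrite /S exchange_big; apply: eq_bigr => u _; apply: eq_bigr => v _.
  by rewrite HB.
have : S + S = 0.
  rewrite {1}ES /S -big_split; apply: big1 => u _.
  rewrite -big_split; apply: big1 => v _.
  by rewrite /= -mulrDr addrC Ha mulr0.
by rewrite -mulr2n => /eqP; rewrite mulrn_eq0 => /orP[//|/eqP].
Qed.

Local Notation midx := (midx N M).

Lemma slot_expand (m : 'I_N) (W : midx -> midx -> C) (B : 'I_M -> 'I_M -> C) :
  \sum_(s : midx) \sum_(t : midx) B (s m) (t m) * W s t =
  \sum_u \sum_v B u v *
     (\sum_(s : midx) \sum_(t : midx) (u == s m)%:R * (v == t m)%:R * W s t).
Proof.
under [RHS]eq_bigr do under eq_bigr do rewrite mulr_sumr.
under [RHS]eq_bigr do under eq_bigr do under eq_bigr do rewrite mulr_sumr.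
under [RHS]eq_bigr do rewrite exchange_big.
under [RHS]eq_bigr do under eq_bigr do rewrite exchange_big.
rewrite [RHS]exchange_big.
under [RHS]eq_bigr do rewrite exchange_big.
apply: eq_bigr => s _; apply: eq_bigr => t _.
have e : forall u v, B u v * ((u == s m)%:R * (v == t m)%:R * W s t)
   = (u == s m)%:R * ((B u v * W s t) * (v == t m)%:R) :> C.
  by move=> u v; ring.
under eq_bigr do under eq_bigr do rewrite e.
under eq_bigr do rewrite -mulr_sumr sum_delta_r.
by rewrite sum_delta_l.
Qed.

Lemma slot (m : 'I_N) (W : midx -> midx -> C) :
  (forall a : 'I_M -> R,
     \sum_(s : midx) \sum_(t : midx) ((a (s m) * a (t m))%:C)%C * W s t = 0) ->
  forall B : 'I_M -> 'I_M -> C, (forall u v, B u v = B v u) ->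
  \sum_(s : midx) \sum_(t : midx) B (s m) (t m) * W s t = 0.
Proof.
move=> HW B HB; rewrite slot_expand; apply: quad0 => // a.
by rewrite -[RHS](HW a) (slot_expand m W (fun u v => ((a u * a v)%:C)%C)).
Qed.

Definition Phi (H : midx -> midx -> C) (b : 'I_N -> 'I_M -> 'I_M -> C) :=
  \sum_(s : midx) \sum_(t : midx) H s t * \prod_k b k (s k) (t k).

Definition r1 (a : 'I_M -> R) : 'I_M -> 'I_M -> C :=
  fun u v => ((a u * a v)%:C)%C.

Lemma Phi_split H b (m : 'I_N) :
  Phi H b = \sum_(s : midx) \sum_(t : midx) b m (s m) (t m) *
     (H s t * \prod_(k | k != m) b k (s k) (t k)).
Proof.
apply: eq_bigr => s _; apply: eq_bigr => t _.
by rewrite (bigD1 m) //=; ring.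
Qed.

Lemma polar (H : midx -> midx -> C) :
  (forall a : 'I_N -> 'I_M -> R, Phi H (fun k => r1 (a k)) = 0) ->
  forall b, (forall k u v, b k u v = b k v u) -> Phi H b = 0.
Proof.
move=> H0.
have P : forall n b (a : 'I_N -> 'I_M -> R),
    (forall k : 'I_N, (k < n)%N -> forall u v, b k u v = b k v u) ->
    (forall k : 'I_N, (n <= k)%N -> b k = r1 (a k)) -> Phi H b = 0.
  elim=> [|n IH] b a Hs Hr.
    rewrite -(H0 a); apply: eq_bigr => s _; apply: eq_bigr => t _.
    by congr (_ * _); apply: eq_bigr => k _; rewrite Hr.
  case: (ltnP n N) => [ltnN|leNn]; last first.
    apply: (IH b a) => k Hk.
      by apply: Hs; apply: ltnW.
    by have := leq_trans (ltn_ord k) (leq_trans leNn Hk); rewrite ltnn.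
  pose mo := Ordinal ltnN.
  rewrite (Phi_split H b mo); apply: slot; last by apply: Hs.
  move=> a'.
  pose b' := fun k => if k == mo then r1 a' else b k.
  pose a'' := fun k => if k == mo then a' else a k.
  have := IH b' a''.
  rewrite (Phi_split H b' mo) /b' eqxx.
  have e : forall s t, \prod_(k | k != mo) (if k == mo then r1 a' else b k) (s k) (t k)
          = \prod_(k | k != mo) b k (s k) (t k).
    by move=> s t; apply: eq_bigr => k /negbTE ->.
  under eq_bigr do under eq_bigr do rewrite e.
  apply.
    move=> k Hk; case: (k =P mo) => [Ekm|_]; last by apply: Hs; apply: ltnW.
    by move: Hk; rewrite Ekm /= ltnn.
  move=> k Hk; rewrite /a''; case: (k =P mo) => [//|/eqP Hne].
  apply: Hr; rewrite ltn_neqAle Hk andbT.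
  by apply: contra Hne => /eqP Hv; apply/eqP/val_inj.
move=> b Hb; apply: (P N b (fun _ _ => 0)) => k Hk //.
by have := ltn_ord k; rewrite ltnNge Hk.
Qed.

Lemma trprod_ext (sg X Y : top) : (forall x y, X x y = Y x y) ->
  trprod sg X = trprod sg Y.
Proof. by move=> H; apply: eq_bigr => x _; apply: eq_bigr => y _; rewrite H. Qed.

Lemma tens_ext (B B' : forall k : 'I_N, 'M[C]_(d k)) :
  (forall k, B k = B' k) -> forall x y, tens B x y = tens B' x y.
Proof. by move=> H x y; apply: eq_bigr => k _; rewrite H. Qed.

Lemma sum4_ex (I J K L : finType) (F : I -> J -> K -> L -> C) :
  \sum_a \sum_b \sum_c \sum_e F a b c e = \sum_c \sum_e \sum_a \sum_b F a b c e.
Proof.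
under eq_bigr do rewrite exchange_big.
under eq_bigr do under eq_bigr do rewrite exchange_big.
rewrite exchange_big.
by under eq_bigr do rewrite exchange_big.
Qed.

Lemma mulop_comb (I : finType) (a : I -> C) (P : I -> top) x y :
  mulop (fun x y => \sum_s a s * P s x y) (fun x y => \sum_s a s * P s x y) x y
  = \sum_s a s * \sum_t a t * mulop (P s) (P t) x y.
Proof.
rewrite /mulop.
under eq_bigr do rewrite mulr_suml.
under eq_bigr do under eq_bigr do rewrite mulr_sumr.
rewrite exchange_big; apply: eq_bigr => s _.
rewrite exchange_big mulr_sumr; apply: eq_bigr => t _.
rewrite !mulr_sumr; apply: eq_bigr => z _; ring.
Qed.

Lemma sum_tau (rho : top) (P Q : forall k : 'I_N, 'M[C]_(d k)) :
  \sum_(tau : {set 'I_N}) trprod rho (tens (fun k => if k \in tau then P k else Q k))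
  = trprod rho (tens (fun k => P k + Q k)).
Proof.
rewrite /trprod exchange_big; apply: eq_bigr => x _.
rewrite exchange_big; apply: eq_bigr => y _.
rewrite -mulr_sumr; congr (_ * _).
rewrite /tens.
transitivity (\prod_k (P k (y k) (x k) + Q k (y k) (x k))); last first.
  by apply: eq_bigr => k _; rewrite mxE.
rewrite bigA_distr; apply: eq_bigr => tau _; apply: eq_bigr => k _.
by case: (k \in tau).
Qed.

Lemma sum_tau1 : \sum_(tau : {set 'I_N}) (1 : C) = \prod_(k < N) 2.
Proof.
rewrite bigA_distr; apply: eq_bigr => tau _.
by rewrite big1 // => k _; case: (k \in tau).
Qed.

Lemma sum3_ex (V : nmodType) (I J K : finType) (F : I -> J -> K -> V) :
  \sum_a \sum_b \sum_c F a b c = \sum_b \sum_c \sum_a F a b c.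
Proof.
rewrite exchange_big; apply: eq_bigr => b _.
by rewrite exchange_big.
Qed.

Lemma trprod_scale (sg X : top) (k : C) :
  trprod sg (fun x y => k * X x y) = k * trprod sg X.
Proof.
rewrite /trprod mulr_sumr; apply: eq_bigr => x _.
rewrite mulr_sumr; apply: eq_bigr => y _; ring.
Qed.

Definition Atau (A : forall k : 'I_N, 'I_M -> 'M[C]_(d k)) (tau : {set 'I_N})
  (k : 'I_N) (j : 'I_M) : 'M[C]_(d k) :=
  if k \in tau then (A k j)^T else A k j.

Definition cc D (T : mlcoef R N M D) (rho : top)
  (A : forall k : 'I_N, 'I_M -> 'M[C]_(d k)) (i : 'I_D) : C :=
  \sum_(s : midx) ((T i s)%:C)%C * trprod rho (tens (fun k => A k (s k))).

Definition Xop D (T : mlcoef R N M D) (A : forall k : 'I_N, 'I_M -> 'M[C]_(d k))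
  (tau : {set 'I_N}) (i : 'I_D) : top :=
  fun x y => \sum_(s : midx) ((T i s)%:C)%C * tens (fun k => Atau A tau k (s k)) x y.

Lemma L1 D (T : mlcoef R N M D) rho A tau i :
  trprod (ptrans tau rho) (Xop T A tau i) = cc T rho A i.
Proof.
rewrite /Xop trprod_sum; apply: eq_bigr => s _; congr (_ * _).
exact: (ptrans_tens tau rho (fun k => A k (s k))).
Qed.

Lemma L2 D (T : mlcoef R N M D) A tau i :
  (forall k j, hermitian_mx (A k j)) -> herm (Xop T A tau i).
Proof.
move=> HA; apply: herm_comb => s; apply: herm_tens => k.
by rewrite /Atau; case: (k \in tau); [apply: herm_tr|]; apply: HA.
Qed.

Definition Sop (A : forall k : 'I_N, 'I_M -> 'M[C]_(d k)) (s t : midx) :=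
  fun k => A k (t k) *m A k (s k) + A k (s k) *m A k (t k).

Lemma L3 D (T : mlcoef R N M D) rho A tau i :
  trprod (ptrans tau rho) (mulop (Xop T A tau i) (Xop T A tau i)) =
  \sum_(s : midx) ((T i s)%:C)%C * \sum_(t : midx) ((T i t)%:C)%C *
    trprod rho (tens (fun k => if k \in tau then A k (t k) *m A k (s k)
                               else A k (s k) *m A k (t k))).
Proof.
rewrite (trprod_ext _ (mulop_comb _ _)) trprod_sum; apply: eq_bigr => s _.
congr (_ * _); rewrite trprod_sum; apply: eq_bigr => t _; congr (_ * _).
rewrite (trprod_ext _ (tens_mul _ _)).
rewrite -(ptrans_tens tau rho (fun k => if k \in tau then A k (t k) *m A k (s k)
                               else A k (s k) *m A k (t k))).
apply: trprod_ext; apply: tens_ext => k.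
by rewrite /Atau; case: (k \in tau); rewrite ?trmx_mul.
Qed.

Definition Hmat D (T : mlcoef R N M D) (s t : midx) : C :=
  ((\sum_i T i s * T i t)%:C)%C - (s == t)%:R.

Lemma np_base D (T : mlcoef R N M D) : norm_preserving T ->
  forall a : 'I_N -> 'I_M -> R, Phi (Hmat T) (fun k => r1 (a k)) = 0.
Proof.
move=> HT a.
have Hsq : \sum_i (mlapply T a i)^+2 = \prod_k \sum_j (a k j)^+2.
  have := congr1 (fun z => z^+2) (HT a); rewrite /enorm /=.
  rewrite sqr_sqrtr ?sumr_ge0 // => [->|i _]; last exact: sqr_ge0.
  rewrite -prodrXl; apply: eq_bigr => k _.
  by rewrite sqr_sqrtr // sumr_ge0 // => j _; apply: sqr_ge0.
transitivity (((\sum_(s : midx) \sum_(t : midx) ((\sum_i T i s * T i t) - (s == t)%:R)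
      * \prod_k (a k (s k) * a k (t k)))%:C)%C).
  rewrite rmorph_sum; apply: eq_bigr => s _.
  rewrite rmorph_sum; apply: eq_bigr => t _.
  by rewrite rmorphM rmorphB rmorph_nat rmorph_prod.
suff -> : \sum_(s : midx) \sum_(t : midx) ((\sum_i T i s * T i t) - (s == t)%:R)
      * \prod_k (a k (s k) * a k (t k)) = 0 by rewrite rmorph0.
under eq_bigr do under eq_bigr do rewrite mulrBl.
under eq_bigr do rewrite sumrB.
rewrite sumrB; apply/eqP; rewrite subr_eq0; apply/eqP.
have E1 : \sum_(s : midx) \sum_(t : midx) (\sum_i T i s * T i t)
      * \prod_k (a k (s k) * a k (t k)) = \sum_i (mlapply T a i)^+2.
  under [RHS]eq_bigr do rewrite expr2 /mlapply mulr_suml.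
  under [RHS]eq_bigr do under eq_bigr do rewrite mulr_sumr.
  rewrite [RHS]sum3_ex; apply: eq_bigr => s _; apply: eq_bigr => t _.
  rewrite big_split /= mulr_suml; apply: eq_bigr => i _; ring.
have E2 : \sum_(s : midx) \sum_(t : midx) (s == t)%:R
      * \prod_k (a k (s k) * a k (t k)) = \prod_k \sum_j (a k j)^+2.
  rewrite bigA_distr_bigA; apply: eq_bigr => s _.
  rewrite (eq_bigr (fun t : midx => (t == s)%:R * \prod_k (a k (s k) * a k (t k))));
    last by move=> t _; rewrite eq_sym.
  rewrite sum_delta_l; apply: eq_bigr => k _; by rewrite expr2.
by rewrite E1 E2 Hsq.
Qed.

Lemma np_main D (T : mlcoef R N M D) (rho : top)
  (A : forall k : 'I_N, 'I_M -> 'M[C]_(d k)) :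
  norm_preserving T -> density rho -> (forall tau, psd (ptrans tau rho)) ->
  (forall k j, hermitian_mx (A k j)) ->
  \sum_(i < D) (cc T rho A i)^+2 <=
  \sum_(s : midx) trprod rho (tens (fun k => A k (s k) *m A k (s k))).
Proof.
move=> HT [Hpsd Htr] Hpt HA.
set K := \prod_(k < N) (2 : C).
have K0 : 0 < K by apply: prodr_gt0 => k _; rewrite ltr0n.
rewrite -(ler_pM2l K0).
have EA : K * \sum_(i < D) (cc T rho A i)^+2 =
    \sum_(tau : {set 'I_N}) \sum_(i < D) (cc T rho A i)^+2.
  by rewrite /K -sum_tau1 mulr_suml; under eq_bigr do rewrite mul1r.
rewrite EA.
apply: (@le_trans _ _ (\sum_(tau : {set 'I_N}) \sum_(i < D)
   trprod (ptrans tau rho) (mulop (Xop T A tau i) (Xop T A tau i)))).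
  apply: ler_sum => tau _; apply: ler_sum => i _.
  rewrite -(L1 T rho A tau i); apply: variance => //.
    by rewrite tr_ptrans.
  exact: L2.
have EC1 : \sum_(tau : {set 'I_N}) \sum_(i < D)
   trprod (ptrans tau rho) (mulop (Xop T A tau i) (Xop T A tau i)) =
   \sum_(s : midx) \sum_(t : midx) ((\sum_i T i s * T i t)%:C)%C *
      trprod rho (tens (Sop A s t)).
  rewrite exchange_big /=.
  under eq_bigr do under eq_bigr do rewrite L3.
  under eq_bigr do under eq_bigr do under eq_bigr do rewrite mulr_sumr.
  under eq_bigr do rewrite sum3_ex.
  under eq_bigr do under eq_bigr do under eq_bigr do rewrite -mulr_sumr -mulr_sumr sum_tau.
  rewrite sum3_ex; apply: eq_bigr => s _; apply: eq_bigr => t _.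
  rewrite rmorph_sum mulr_suml; apply: eq_bigr => i _.
  by rewrite rmorphM mulrA.
have EC2 : \sum_(s : midx) \sum_(t : midx) ((\sum_i T i s * T i t)%:C)%C *
      trprod rho (tens (Sop A s t)) =
    \sum_(s : midx) \sum_(t : midx) (s == t)%:R * trprod rho (tens (Sop A s t)).
  apply/eqP; rewrite -subr_eq0 -sumrB.
  under eq_bigr do rewrite -sumrB.
  under eq_bigr do under eq_bigr do rewrite -mulrBl.
  rewrite -/(Hmat T); apply/eqP.
  transitivity (\sum_x \sum_y rho x y *
     Phi (Hmat T) (fun k u v => (A k v *m A k u + A k u *m A k v) (y k) (x k))).
    rewrite /trprod.
    under eq_bigr do under eq_bigr do rewrite mulr_sumr.
    under eq_bigr do under eq_bigr do under eq_bigr do rewrite mulr_sumr.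
    rewrite sum4_ex; apply: eq_bigr => x _; apply: eq_bigr => y _.
    rewrite /Phi mulr_sumr; apply: eq_bigr => s _.
    rewrite mulr_sumr; apply: eq_bigr => t _.
    by rewrite mulrCA.
  apply: big1 => x _; apply: big1 => y _.
  rewrite (polar (np_base HT)) ?mulr0 // => k u v.
  by rewrite addrC.
have EC3 : \sum_(s : midx) \sum_(t : midx) (s == t)%:R * trprod rho (tens (Sop A s t))
   = \sum_(s : midx) trprod rho (tens (Sop A s s)).
  apply: eq_bigr => s _.
  rewrite (eq_bigr (fun t : midx => (t == s)%:R * trprod rho (tens (Sop A s t))));
    last by move=> t _; rewrite eq_sym.
  by rewrite sum_delta_l.
rewrite EC1 EC2 EC3 mulr_sumr le_eqVlt; apply/orP; left; apply/eqP.
apply: eq_bigr => s _.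
rewrite -trprod_scale; apply: trprod_ext => x y.
rewrite /tens /K -big_split /=; apply: eq_bigr => k _.
rewrite /Sop mxE; ring.
Qed.

Lemma coef_basis D (T : mlcoef R N M D) i (s : midx) :
  mlapply T (fun k j => ((j == s k)%:R : R)) i = T i s.
Proof.
rewrite /mlapply (bigD1 s) //=.
have -> : \prod_(k < N) ((s k == s k)%:R : R) = 1.
  by rewrite big1 // => k _; rewrite eqxx.
rewrite mulr1 [X in _ + X]big1 ?addr0 // => s' Hne.
have /existsP [k Hk] : [exists k, s' k != s k].
  rewrite -negb_forall; apply: contra Hne => /forallP H.
  by apply/eqP/ffunP => k; apply/eqP; exact: H k.
by rewrite (bigD1 k) //= (negbTE Hk) mul0r mulr0.
Qed.

Lemma realC (r : R) : ((r%:C)%C : C) \is Num.real.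
Proof. by apply/complex_realP; exists r. Qed.

Lemma cc_real D (T : mlcoef R N M D) (rho : top) A i :
  herm rho -> (forall k j, hermitian_mx (A k j)) -> cc T rho A i \is Num.real.
Proof.
move=> Hr HA; apply: rpred_sum => s _; apply: rpredM; first exact: realC.
by apply: real_trprod => //; apply: herm_tens.
Qed.

Lemma jensen n (w : 'I_n -> R) (z : 'I_n -> C) :
  (forall l, 0 <= w l) -> \sum_l w l = 1 -> (forall l, z l \is Num.real) ->
  (\sum_l ((w l)%:C)%C * z l)^+2 <= \sum_l ((w l)%:C)%C * z l ^+ 2.
Proof.
move=> Hw Hs Hz.
set c := \sum_l ((w l)%:C)%C * z l.
have Hc : c \is Num.real by apply: rpred_sum => l _; apply: rpredM => //; apply: realC.
have W1 : \sum_l ((w l)%:C)%C = 1 by rewrite -rmorph_sum Hs rmorph1.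
rewrite -subr_ge0.
have -> : \sum_l ((w l)%:C)%C * z l ^+ 2 - c^+2 =
    \sum_l ((w l)%:C)%C * (z l - c)^+2.
  have e : forall l, ((w l)%:C)%C * (z l - c)^+2 =
     ((w l)%:C)%C * z l ^+ 2 + (- (2 * c) * (((w l)%:C)%C * z l) + c^+2 * ((w l)%:C)%C).
    by move=> l; ring.
  under [RHS]eq_bigr do rewrite e.
  rewrite big_split big_split /= -!mulr_sumr W1 -/c; ring.
apply: sumr_ge0 => l _; apply: mulr_ge0; first by rewrite ler0c.
by rewrite -realEsqr rpredB.
Qed.
End Main.

Theorem corollary1 (R : realType) (N M D : nat) (T : mlcoef R N M D)
  (d : 'I_N -> nat) (rho : top R d)
  (A : forall k : 'I_N, 'I_M -> 'M[R[i]]_(d k)) :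
  contraction T ->
  (convex_comb_norm_preserving T \/ has_np_dilation T) ->
  density rho ->
  (forall tau : {set 'I_N}, psd (ptrans tau rho)) ->
  (forall k j, hermitian_mx (A k j)) ->
  \sum_(i < D) (\sum_(s : midx N M)
       ((T i s)%:C)%C * trprod rho (tens (fun k => A k (s k)))) ^+ 2
  <= \sum_(s : midx N M)
       trprod rho (tens (fun k => A k (s k) *m A k (s k))).
Proof.
move=> _ [Hc|Hd] Hden Hpt HA; have Hh := psd_herm Hden.1; last first.
  move: Hd => [D' [hD [T' [HT' Heq]]]].
  have Hco i s : T i s = T' (widen_ord hD i) s.
    by rewrite -(coef_basis T i s) -(coef_basis T' (widen_ord hD i) s) Heq.
  have E : \sum_(i < D) (\sum_(s : midx N M)
       ((T i s)%:C)%C * trprod rho (tens (fun k => A k (s k)))) ^+ 2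
     = \sum_(i < D) (cc T' rho A (widen_ord hD i))^+2.
    apply: eq_bigr => i _; rewrite /cc; congr (_ ^+ 2).
    by apply: eq_bigr => s _; rewrite Hco.
  rewrite E; apply: le_trans (np_main HT' Hden Hpt HA).
  rewrite (bigID (fun j : 'I_D' => (j < D)%N)) /= big_ord_narrow.
  rewrite -[X in X <= _]addr0 lerD //.
  apply: sumr_ge0 => j _; rewrite -realEsqr; exact: cc_real.
move: Hc => [n [w [U [Hw Hs HU Heq]]]].
have Hco i s : T i s = \sum_l w l * U l i s.
  rewrite -(coef_basis T i s) Heq; apply: eq_bigr => l _.
  by rewrite coef_basis.
have E : \sum_(i < D) (\sum_(s : midx N M)
     ((T i s)%:C)%C * trprod rho (tens (fun k => A k (s k)))) ^+ 2
   = \sum_(i < D) (\sum_l ((w l)%:C)%C * cc (U l) rho A i)^+2.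
  apply: eq_bigr => i _; congr (_ ^+ 2).
  under eq_bigr do rewrite Hco rmorph_sum mulr_suml.
  rewrite exchange_big; apply: eq_bigr => l _.
  rewrite /cc mulr_sumr; apply: eq_bigr => s _.
  by rewrite rmorphM mulrA.
rewrite E.
apply: (@le_trans _ _ (\sum_(i < D) \sum_l ((w l)%:C)%C * (cc (U l) rho A i)^+2)).
  by apply: ler_sum => i _; apply: jensen => // l; apply: cc_real.
rewrite exchange_big /=.
apply: (@le_trans _ _ (\sum_l ((w l)%:C)%C * \sum_(s : midx N M)
       trprod rho (tens (fun k => A k (s k) *m A k (s k))))).
  apply: ler_sum => l _; rewrite -mulr_sumr; apply: ler_wpM2l.
    by rewrite ler0c.
  exact: np_main.
by rewrite -mulr_suml -rmorph_sum Hs rmorph1 mul1r.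
Qed.
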